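(* Let $R$ be an integral domain, $M$ an $R$-module, and $d$ an integer-valued metric on $M$. Then the function $\Delta:\mathbb{P}^*(M)\times\mathbb{P}^*(M)\to\mathbb{Z}$ is a metric on $\mathbb{P}^*(M)$.
   Context: Let $M^\circ=M\setminus\{0\}$; define $x\sim'y$ on $M^\circ$ if there exist $m\in M$ and $r,s\in R$ with $x=rm$, $y=sm$; let $\sim$ be the equivalence relation generated by $\sim'$; $\mathbb{P}(M)=M^\circ/\sim$, and $\mathbb{P}^*(M)=\{*\}\sqcup\mathbb{P}(M)$, where $*$ is the class consisting of $0\in M$ alone. For classes $[x],[y]\in\mathbb{P}^*(M)$ set $\delta([x],[y])=\inf\{d(x',y'): x'\in[x],\ y'\in[y]\}$, and $\Delta([x],[y])=\min\{\delta([x_0],[x_1])+\delta([x_1],[x_2])+\cdots+\delta([x_{n-1}],[x_n])\}$, the minimum over all finite sequences of classes with $[x_0]=[x]$ and $[x_n]=[y]$. *)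

(* Defs.v *)
From HB Require Import structures.
From mathcomp Require Import all_boot all_order all_algebra.
From Stdlib Require Import Relation_Operators ClassicalEpsilon.
Set Implicit Arguments. Unset Strict Implicit. Unset Printing Implicit Defensive.
Import Order.TTheory GRing.Theory Num.Theory.
Local Open Scope ring_scope.

(* Least natural number satisfying P (the minimum / infimum of a nonempty
   set of naturals); an arbitrary value if P is empty. *)
Definition natmin (P : nat -> Prop) : nat :=
  epsilon (inhabits 0%N) (fun n => P n /\ forall m, P m -> (n <= m)%N).

Definition is_metric (T : Type) (d : T -> T -> int) : Prop :=
  [/\ forall x y, 0 <= d x y,
      forall x y, d x y = 0 <-> x = y,
      forall x y, d x y = d y x
    & forall x y z, d x z <= d x y + d y z].

(* a pseudo-metric on T whose zero set is exactly the equivalence E: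
   this is exactly a metric on the quotient T / E (together with
   compatibility of the function with E). *)
Definition is_metric_mod (T : Type) (E : T -> T -> Prop) (D : T -> T -> int) : Prop :=
  [/\ forall x y, 0 <= D x y,
      forall x y, D x y = 0 <-> E x y,
      forall x y, D x y = D y x
    & forall x y z, D x z <= D x y + D y z].

Section Proj.
Variables (R : idomainType) (M : lmodType R).

Definition simp (x y : M) : Prop :=
  x != 0 /\ y != 0 /\ exists (m : M) (r s : R), x = r *: m /\ y = s *: m.

(* the equivalence relation on M whose classes are the points of P*(M):
   the equivalence generated by ~' on M°, plus the singleton class {0} = * *)
Definition pcls (x y : M) : Prop := clos_refl_sym_trans M simp x y.

Variable d : M -> M -> int.

Definition pdelta (x y : M) : int :=
  (natmin (fun n => exists x' y', pcls x x' /\ pcls y y' /\ d x' y' = n%:Z))%:Z.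

Definition chain_cost (x0 : M) (s : seq M) : int :=
  \sum_(p <- zip (x0 :: s) s) pdelta p.1 p.2.

Definition pDelta (x y : M) : int :=
  (natmin (fun n => exists (x0 : M) (s : seq M),
     pcls x x0 /\ pcls y (last x0 s) /\ chain_cost x0 s = n%:Z))%:Z.

End Proj.

(* Main.v *)
Require Import Defs.
From HB Require Import structures.
From mathcomp Require Import all_boot all_order all_algebra.
From Stdlib Require Import Relation_Operators ClassicalEpsilon Classical.
Import Order.TTheory GRing.Theory Num.Theory.
Local Open Scope ring_scope.
Set Implicit Arguments. Unset Strict Implicit. Unset Printing Implicit Defensive.

Lemma ex_min_nat (P : nat -> Prop) : (exists n, P n) ->
  exists n, P n /\ forall m, P m -> (n <= m)%N.
Proof.
case=> n Pn.
suff H : forall N n, (n <= N)%N -> P n -> exists n, P n /\ forall m, P m -> (n <= m)%N.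
  exact: (H n n (leqnn n) Pn).
elim=> [|N IH] k hk Pk.
  exists k; split => // m _; move: hk; rewrite leqn0 => /eqP ->; done.
case: (classic (exists m, (m < k)%N /\ P m)) => [[m [hm Pm]]|hn].
  apply: (IH m) => //; rewrite -ltnS; exact: leq_trans hm hk.
exists k; split => // m Pm; rewrite leqNgt; apply/negP => hm; apply: hn; by exists m.
Qed.

Lemma natminP (P : nat -> Prop) : (exists n, P n) ->
  P (natmin P) /\ forall m, P m -> (natmin P <= m)%N.
Proof.
move=> h; have := epsilon_spec (inhabits 0%N) _ (@ex_min_nat P h); rewrite /natmin; move=> H; exact H.
Qed.

Lemma natmin_ext (P Q : nat -> Prop) : (forall n, P n <-> Q n) -> (exists n, P n) ->
  natmin P = natmin Q.
Proof.
move=> hPQ hP.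
have hQ : exists n, Q n by case: hP => n /hPQ; exists n.
have [p1 p2] := natminP hP; have [q1 q2] := natminP hQ.
apply/eqP; rewrite eqn_leq; apply/andP; split.
  by apply: p2; apply/hPQ.
by apply: q2; apply/hPQ.
Qed.

Lemma natmin_le (P : nat -> Prop) n : P n -> (natmin P <= n)%N.
Proof. move=> Pn; have [_ h] := natminP (ex_intro _ n Pn); exact: h. Qed.

Lemma int_nat (z : int) : 0 <= z -> z = (absz z)%:Z.
Proof. by case: z. Qed.

Lemma pcls_refl (R : idomainType) (M : lmodType R) (x : M) : pcls x x.
Proof. exact: rst_refl. Qed.
Lemma pcls_sym (R : idomainType) (M : lmodType R) (x y : M) : pcls x y -> pcls y x.
Proof. exact: rst_sym. Qed.
Lemma pcls_trans (R : idomainType) (M : lmodType R) (x y z : M) :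
  pcls x y -> pcls y z -> pcls x z.
Proof. exact: rst_trans. Qed.

Lemma pdelta_ex (R : idomainType) (M : lmodType R) (d : M -> M -> int) x y :
  (forall x y, 0 <= d x y) ->
  exists n, exists x' y', pcls x x' /\ pcls y y' /\ d x' y' = n%:Z.
Proof.
move=> h0; exists (absz (d x y)), x, y; split; first exact: pcls_refl.
split; first exact: pcls_refl. exact: int_nat.
Qed.

Lemma pdelta_inv (R : idomainType) (M : lmodType R) (d : M -> M -> int) x x' y y' :
  (forall x y, 0 <= d x y) ->
  pcls x x' -> pcls y y' -> pdelta d x y = pdelta d x' y'.
Proof.
move=> h0 hx hy; rewrite /pdelta; congr Posz; apply: natmin_ext; last exact: pdelta_ex.
move=> n; split=> -[a [b [ha [hb e]]]]; exists a, b.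
  by split; [exact: pcls_trans (pcls_sym hx) ha | split; [exact: pcls_trans (pcls_sym hy) hb|]].
by split; [exact: pcls_trans hx ha | split; [exact: pcls_trans hy hb|]].
Qed.

Lemma pdelta_sym (R : idomainType) (M : lmodType R) (d : M -> M -> int) x y :
  is_metric d -> pdelta d x y = pdelta d y x.
Proof.
case=> h0 _ hs _; rewrite /pdelta; congr Posz; apply: natmin_ext; last exact: pdelta_ex.
by move=> n; split=> -[a [b [ha [hb e]]]]; exists b, a; rewrite hs.
Qed.

Lemma pdelta0 (R : idomainType) (M : lmodType R) (d : M -> M -> int) x y :
  is_metric d -> pdelta d x y = 0 -> pcls x y.
Proof.
case=> h0 hz _ _ e.
have [[a [b [ha [hb hab]]]] _] := natminP (pdelta_ex x y h0).
move: e; rewrite /pdelta => -[e]; rewrite e in hab.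
move/hz: hab => eab; subst b.
exact: pcls_trans ha (pcls_sym hb).
Qed.

Lemma cost_nil (R : idomainType) (M : lmodType R) (d : M -> M -> int) x0 :
  chain_cost d x0 [::] = 0.
Proof. by rewrite /chain_cost big_nil. Qed.

Lemma cost_cons (R : idomainType) (M : lmodType R) (d : M -> M -> int) x0 a s :
  chain_cost d x0 (a :: s) = pdelta d x0 a + chain_cost d a s.
Proof. by rewrite /chain_cost /= big_cons. Qed.

Lemma cost_cat (R : idomainType) (M : lmodType R) (d : M -> M -> int) x0 s t :
  chain_cost d x0 (s ++ t) = chain_cost d x0 s + chain_cost d (last x0 s) t.
Proof.
elim: s x0 => [|a s IH] x0 /=; first by rewrite cost_nil add0r.
by rewrite !cost_cons IH addrA.
Qed.

Lemma cost_rcons (R : idomainType) (M : lmodType R) (d : M -> M -> int) x0 s z :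
  chain_cost d x0 (rcons s z) = chain_cost d x0 s + pdelta d (last x0 s) z.
Proof. by rewrite -cats1 cost_cat cost_cons cost_nil addr0. Qed.

Lemma cost_ge0 (R : idomainType) (M : lmodType R) (d : M -> M -> int) x0 s :
  0 <= chain_cost d x0 s.
Proof.
elim: s x0 => [|a s IH] x0; first by rewrite cost_nil.
by rewrite cost_cons addr_ge0.
Qed.

Lemma cost_inv (R : idomainType) (M : lmodType R) (d : M -> M -> int) x0 x1 s :
  (forall x y, 0 <= d x y) -> pcls x0 x1 -> chain_cost d x0 s = chain_cost d x1 s.
Proof.
move=> h0 h; case: s => [|a s]; first by rewrite !cost_nil.
by rewrite !cost_cons (pdelta_inv h0 h (pcls_refl a)).
Qed.

Lemma cost_rev (R : idomainType) (M : lmodType R) (d : M -> M -> int) x0 s :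
  is_metric d ->
  chain_cost d x0 s = chain_cost d (last x0 s) (rev (belast x0 s)) /\ last (last x0 s) (rev (belast x0 s)) = x0.
Proof.
move=> hd; elim: s x0 => [|a s IH] x0 /=; first by rewrite !cost_nil.
have [e1 e2] := IH a.
rewrite rev_cons cost_rcons last_rcons cost_cons e2 -e1 (pdelta_sym _ _ hd) addrC.
by split.
Qed.

Lemma cost0 (R : idomainType) (M : lmodType R) (d : M -> M -> int) x0 s :
  is_metric d -> chain_cost d x0 s = 0 -> pcls x0 (last x0 s).
Proof.
move=> hd; elim: s x0 => [|a s IH] x0 /=; first by move=> _; exact: pcls_refl.
rewrite cost_cons => e.
have h1 : 0 <= pdelta d x0 a by [].
have h2 := cost_ge0 d a s.
have e1 : pdelta d x0 a = 0 by apply/eqP; rewrite eq_le h1 -e lerDl h2.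
have e2 : chain_cost d a s = 0 by move: e; rewrite e1 add0r.
exact: pcls_trans (pdelta0 hd e1) (IH a e2).
Qed.

Lemma pDelta_ex (R : idomainType) (M : lmodType R) (d : M -> M -> int) x y :
  exists n, exists (x0 : M) (s : seq M),
     pcls x x0 /\ pcls y (last x0 s) /\ chain_cost d x0 s = n%:Z.
Proof.
exists (absz (chain_cost d x [:: y])), x, [:: y].
split; first exact: pcls_refl. split; first exact: pcls_refl.
exact: int_nat (cost_ge0 _ _ _).
Qed.

Theorem theorem5p2 (R : idomainType) (M : lmodType R) (d : M -> M -> int) :
  is_metric d ->
  (forall x x' y y' : M, pcls x x' -> pcls y y' -> pDelta d x y = pDelta d x' y') /\
  is_metric_mod (@pcls R M) (pDelta d).
Proof.
move=> hd; have h0 : forall x y, 0 <= d x y by case: hd.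
split.
  move=> x x' y y' hx hy; rewrite /pDelta; congr Posz; apply: natmin_ext; last exact: pDelta_ex.
  move=> n; split=> -[x0 [s [h1 [h2 e]]]]; exists x0, s.
    by split; [exact: pcls_trans (pcls_sym hx) h1 | split; [exact: pcls_trans (pcls_sym hy) h2|]].
  by split; [exact: pcls_trans hx h1 | split; [exact: pcls_trans hy h2|]].
split.
- by [].
- move=> x y; split.
    rewrite /pDelta => -[e].
    have [[x0 [s [h1 [h2 c]]]] _] := natminP (pDelta_ex d x y).
    rewrite e in c.
    have := cost0 hd c => h3.
    exact: pcls_trans h1 (pcls_trans h3 (pcls_sym h2)).
  move=> hxy; rewrite /pDelta; congr Posz; apply/eqP; rewrite -leqn0.
  apply: natmin_le; exists x, [::]; split; first exact: pcls_refl.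
  by split; [exact: pcls_sym | rewrite cost_nil].
- move=> x y; rewrite /pDelta; congr Posz; apply: natmin_ext; last exact: pDelta_ex.
  have H : forall x y n, (exists (x0 : M) (s : seq M),
     pcls x x0 /\ pcls y (last x0 s) /\ chain_cost d x0 s = n%:Z) ->
     (exists (x0 : M) (s : seq M),
     pcls y x0 /\ pcls x (last x0 s) /\ chain_cost d x0 s = n%:Z).
    move=> a b n [x0 [s [h1 [h2 c]]]].
    have [e1 e2] := cost_rev x0 s hd.
    exists (last x0 s), (rev (belast x0 s)); rewrite e2 -e1.
    by split.
  by move=> n; split; apply: H.
- move=> x y z; rewrite /pDelta.
  have [[x0 [s [h1 [h2 c1]]]] _] := natminP (pDelta_ex d x y).
  have [[y0 [t [h3 [h4 c2]]]] _] := natminP (pDelta_ex d y z).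
  rewrite -PoszD lez_nat; apply: natmin_le.
  exists x0, (s ++ t); split => //; split.
    rewrite last_cat.
    case: t h4 {c2} => [|a t] /= h4; last exact: h4.
    exact: pcls_trans h4 (pcls_trans (pcls_sym h3) h2).
  rewrite cost_cat c1 (cost_inv _ h0 (pcls_trans (pcls_sym h2) h3)) c2.
  by rewrite PoszD.
Qed.
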